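(* A finite idempotent algebra $\mathbf{A}$ lies in a congruence distributive variety (equivalently, $\mathbf{A}$ has directed Jónsson terms) if and only if $\{a\}$ Jónsson absorbs $\mathbf{A}$ for every $a\in A$.
   Context: Directed Jónsson terms: ternary terms $d_0,\dots,d_n$ with $d_0(x,y,z)=x$, $d_n(x,y,z)=z$, $d_i(x,y,y)=d_{i+1}(x,x,y)$ for $i<n$, and $d_i(x,y,x)=x$ for all $i$. Jónsson absorption: a subuniverse $B$ of $\mathbf{A}$ Jónsson absorbs $\mathbf{A}$ if there are ternary terms $d_0,\dots,d_n$ of $\mathbf{A}$ such that $d_i(b,a,b')\in B$ for all $i$, all $b,b'\in B$, $a\in A$; $d_i(x,y,y)=d_{i+1}(x,x,y)$ for all $i<n$ and all $x,y\in A$; $d_0(x,y,z)=x$ and $d_n(x,y,z)=z$ for all $x,y,z\in A$. An algebra is idempotent if every basic operation $f$ satisfies $f(x,\dots,x)\approx x$. *)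

(* Defs.v *)
From mathcomp Require Import all_boot.
Set Implicit Arguments. Unset Strict Implicit. Unset Printing Implicit Defensive.

(* An algebra is given by a finite carrier T, an index type I of basic
   operation symbols, arities ar, and the interpretation f of each symbol:
   f i : ('I_(ar i) -> T) -> T. *)

Inductive term (I : Type) (ar : I -> nat) (V : Type) : Type :=
| Var : V -> term ar V
| App : forall i : I, ('I_(ar i) -> term ar V) -> term ar V.

Fixpoint eval (T : Type) (I : Type) (ar : I -> nat)
  (f : forall i : I, ('I_(ar i) -> T) -> T) (V : Type) (e : V -> T)
  (t : term ar V) : T :=
  match t with
  | Var v => e v
  | App i g => f i (fun j => eval f e (g j))
  end.

Definition teval3 (T : Type) (I : Type) (ar : I -> nat)
  (f : forall i : I, ('I_(ar i) -> T) -> T) (t : term ar 'I_3) (x y z : T) : T :=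
  eval f (fun v : 'I_3 => nth x [:: x; y; z] v) t.

Definition idempotent_alg (T : Type) (I : Type) (ar : I -> nat)
  (f : forall i : I, ('I_(ar i) -> T) -> T) : Prop :=
  forall (i : I) (x : T), f i (fun _ => x) = x.

Definition is_subuniverse (T : finType) (I : Type) (ar : I -> nat)
  (f : forall i : I, ('I_(ar i) -> T) -> T) (B : {set T}) : Prop :=
  forall (i : I) (args : 'I_(ar i) -> T),
    (forall j, args j \in B) -> f i args \in B.

Definition directed_Jonsson_terms (T : Type) (I : Type) (ar : I -> nat)
  (f : forall i : I, ('I_(ar i) -> T) -> T) (n : nat) (d : nat -> term ar 'I_3)
  : Prop :=
  [/\ forall x y z : T, teval3 f (d 0) x y z = x,
      forall x y z : T, teval3 f (d n) x y z = z,
      forall i, i < n -> forall x y : T, teval3 f (d i) x y y = teval3 f (d i.+1) x x y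
    & forall i, i <= n -> forall x y : T, teval3 f (d i) x y x = x].

Definition has_directed_Jonsson_terms (T : Type) (I : Type) (ar : I -> nat)
  (f : forall i : I, ('I_(ar i) -> T) -> T) : Prop :=
  exists (n : nat) (d : nat -> term ar 'I_3), directed_Jonsson_terms f n d.

Definition Jonsson_absorbs (T : finType) (I : Type) (ar : I -> nat)
  (f : forall i : I, ('I_(ar i) -> T) -> T) (B : {set T}) : Prop :=
  is_subuniverse f B /\
  exists (n : nat) (d : nat -> term ar 'I_3),
    [/\ forall i, i <= n -> forall b b' a : T, b \in B -> b' \in B ->
            teval3 f (d i) b a b' \in B,
        forall i, i < n -> forall x y : T, teval3 f (d i) x y y = teval3 f (d i.+1) x x y,
        forall x y z : T, teval3 f (d 0) x y z = x
      & forall x y z : T, teval3 f (d n) x y z = z].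

(* Main.v *)
Require Import Defs.
From mathcomp Require Import all_boot.
From Stdlib Require Import FunctionalExtensionality.

Set Implicit Arguments. Unset Strict Implicit.

Section Aux.
Variables (T : finType) (I : Type) (ar : I -> nat)
  (f : forall i : I, ('I_(ar i) -> T) -> T).

Fixpoint subst (V W : Type) (g : V -> term ar W) (t : term ar V) : term ar W :=
  match t with
  | Var v => g v
  | App i h => @App _ _ _ i (fun j => subst g (h j))
  end.

Lemma eval_subst V W (g : V -> term ar W) (e : W -> T) t :
  eval f e (subst g t) = eval f (fun v => eval f e (g v)) t.
Proof.
elim: t => [v|i h IH] //=.
by apply: f_equal; apply: functional_extensionality => j; apply: IH.
Qed.

Lemma eval_idem (Hidem : idempotent_alg f) V (t : term ar V) a :
  eval f (fun _ => a) t = a.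
Proof.
elim: t => [v|i h IH] //=.
have -> : (fun j => eval f (fun _ => a) (h j)) = (fun _ => a).
  by apply: functional_extensionality => j; apply: IH.
exact: Hidem.
Qed.

Definition o2 : 'I_3 := @Ordinal 3 2 isT.
Definition o1 : 'I_3 := @Ordinal 3 1 isT.

Definition mid (e : term ar 'I_3) : 'I_3 -> term ar 'I_3 :=
  fun v => nth (Var ar ord0) [:: Var ar ord0; e; Var ar o2] v.

Lemma teval_mid t e x y z :
  teval3 f (subst (mid e) t) x y z = teval3 f t x (teval3 f e x y z) z.
Proof.
rewrite /teval3 eval_subst; congr (eval f _ t).
apply: functional_extensionality => -[[|[|[|v]]] Hv] //=.
Qed.

Definition chain n (d : nat -> term ar 'I_3) :=
  [/\ forall x y z : T, teval3 f (d 0) x y z = x,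
      forall x y z : T, teval3 f (d n) x y z = z
    & forall i, i < n -> forall x y : T, teval3 f (d i) x y y = teval3 f (d i.+1) x x y].

Definition absorbs (P : T -> Prop) n (d : nat -> term ar 'I_3) :=
  forall i, i <= n -> forall x y : T, P x -> teval3 f (d i) x y x = x.

Definition comp m (d e : nat -> term ar 'I_3) : nat -> term ar 'I_3 :=
  fun k => subst (mid (e (k %% m.+1))) (d (k %/ m.+1)).

Lemma comp_chain n m d e : chain n d -> chain m e ->
  chain (n * m.+1 + m) (comp m d e).
Proof.
move=> [d0 dn dl] [e0 en el]; split.
- by move=> x y z; rewrite /comp div0n mod0n teval_mid.
- move=> x y z; rewrite /comp divnMDl // modnMDl divn_small // modn_small //.
  by rewrite addn0 teval_mid en dn.
- move=> k Hk x y.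
  have Hj : k %% m.+1 < m.+1 by rewrite ltn_pmod.
  have Hk' : k = k %/ m.+1 * m.+1 + k %% m.+1 by exact: divn_eq.
  rewrite /comp !teval_mid.
  have [jm|jm] := ltnP (k %% m.+1) m.
  + have E : k.+1 = k %/ m.+1 * m.+1 + (k %% m.+1).+1 by rewrite {1}Hk' addnS.
    have jm2 : (k %% m.+1).+1 < m.+1 by rewrite ltnS.
    rewrite E divnMDl // modnMDl (divn_small jm2) (modn_small jm2) addn0.
    by rewrite el.
  + have jm' : k %% m.+1 = m by apply/eqP; rewrite eqn_leq jm -ltnS Hj.
    have E : k.+1 = (k %/ m.+1).+1 * m.+1 + 0.
      by rewrite mulSn addn0 addnC {1}Hk' jm' addnS.
    rewrite E divnMDl // modnMDl mod0n div0n addn0 jm' en e0.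
    apply: dl.
    have := Hk; rewrite {1}Hk' jm'.
    rewrite ltn_add2r ltn_mul2r /=; by [].
Qed.

Lemma comp_absL (P : T -> Prop) n m d e : absorbs P n d ->
  absorbs P (n * m.+1 + m) (comp m d e).
Proof.
move=> Hd k Hk x y Px; rewrite /comp teval_mid; apply: Hd => //.
have -> : n = (n * m.+1 + m) %/ m.+1 by rewrite divnMDl // divn_small // addn0.
exact: leq_div2r.
Qed.

Lemma comp_absR (Hidem : idempotent_alg f) (P : T -> Prop) n m d e : absorbs P m e ->
  absorbs P (n * m.+1 + m) (comp m d e).
Proof.
move=> He k Hk x y Px; rewrite /comp teval_mid He //.
- by rewrite /teval3 -[X in _ = X](eval_idem Hidem (d (k %/ m.+1)) x);
     congr (eval f _ _); apply: functional_extensionality => -[[|[|[|v]]] Hv].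
- by rewrite -ltnS ltn_pmod.
Qed.

End Aux.

Theorem corollary2p4 (T : finType) (I : Type) (ar : I -> nat)
  (f : forall i : I, ('I_(ar i) -> T) -> T) (Hidem : idempotent_alg f) :
  has_directed_Jonsson_terms f <-> (forall a : T, Jonsson_absorbs f [set a]).
Proof.
split.
- move=> [n [d [d0 dn dl dx]]] a; split.
    move=> i args Ha.
    have -> : args = (fun _ => a).
      by apply: functional_extensionality => j; move: (Ha j); rewrite inE => /eqP.
    by rewrite Hidem inE.
  exists n, d; split => // i Hi b b' x; rewrite !inE => /eqP -> /eqP ->.
  by rewrite dx.
- move=> H.
  suff [n [d [Hc Ha]]] : exists n d, chain f n d /\
      absorbs f (fun x => x \in enum T) n d.
    case: Hc => c0 cn cl; exists n, d; split => // i Hi x y.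
    by apply: Ha => //; rewrite mem_enum.
  elim: (enum T) => [|a s [n [d [Hc Ha]]]].
  + case: (pickP (fun _ : T => true)) => [t _|none].
      case: (H t) => _ [n [d [_ dl d0 dn]]].
      by exists n, d; split => //; split.
    exists 0, (fun _ => Var ar ord0); split => //.
    split => // x; by move: (none x).
  + case: (H a) => _ [m [e [ea el e0 en]]].
    exists (n * m.+1 + m), (comp m d e); split.
      by apply: comp_chain => //; split.
    move=> k Hk x y; rewrite inE => /orP [/eqP ->|xs].
      have He : absorbs f (fun x => x = a) m e.
        move=> j Hj x' y' ->; apply/eqP; rewrite -in_set1.
        by apply: ea; rewrite ?inE.
      exact: (comp_absR Hidem d He Hk).
    exact: (comp_absL e Ha Hk).
Qed.
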